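(* Let $p(x)=\sum_{j=1}^k\frac{\pi_j}{\sigma^d(2\pi)^{d/2}}e^{-\|x-\mu_j\|^2/(2\sigma^2)}$ be a mixture of Gaussians $N(\mu_j,\sigma^2I)$ on $\mathbb{R}^d$ with weights $\pi_j>0$, $\sum_j\pi_j=1$, and let $X\sim p$. Let $\epsilon>0$ satisfy $$\epsilon\le\min_j\left(\frac{\pi_j^{1/d}}{\sqrt{2\pi}\,\sigma e^{16}}\right)^d$$ and suppose $$\min_{j\ne k}\|\mu_j-\mu_k\|>2\sigma\max_j\sqrt{2d\log\Big(\frac1{\sigma\sqrt{2\pi}}\Big)+2\log\Big(\frac1\epsilon\Big)-2\log\Big(\frac1{\pi_j}\Big)}.$$ Then $\mathbb{P}(p(X)<\epsilon)\le e^{-8d}$. *)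

(* Defs.v *)
From HB Require Import structures.
From mathcomp Require Import all_boot all_order all_algebra.
From mathcomp Require Import all_classical all_reals all_analysis.
Set Implicit Arguments. Unset Strict Implicit. Unset Printing Implicit Defensive.
Import Order.TTheory GRing.Theory Num.Theory.
Local Open Scope ring_scope.

Section Defs.
Variable R : realType.

Definition sqdist (d : nat) (x y : d.-tuple R) : R :=
  \sum_(i < d) (tnth x i - tnth y i) ^+ 2.

Definition euclid_dist (d : nat) (x y : d.-tuple R) : R := Num.sqrt (sqdist x y).

Definition gmix_density (d k : nat) (w : 'I_k -> R) (mu : 'I_k -> d.-tuple R)
    (sigma : R) (x : d.-tuple R) : R :=
  \sum_(j < k) w j / (sigma ^+ d * powR (2 * (pi : R)) (d%:R / 2))
               * expR (- sqdist x (mu j) / (2 * sigma ^+ 2)).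

(* Lebesgue integral over R^d of a nonnegative extended-real function,
   computed as the iterated integral w.r.t. Lebesgue measure on R
   (equal to the integral w.r.t. d-dimensional Lebesgue measure by Tonelli). *)
Fixpoint lebesgue_integral_Rn (n : nat) : (n.-tuple R -> \bar R) -> \bar R :=
  match n with
  | 0 => fun f => f [tuple]
  | n'.+1 => fun f =>
      (\int[@lebesgue_measure R]_(t in [set: R])
         lebesgue_integral_Rn (fun u : n'.-tuple R => f [tuple of t :: u]))%E
  end.

End Defs.

(* Main.v *)
Require Import Defs.
From HB Require Import structures.
From mathcomp Require Import all_boot all_order all_algebra.
From mathcomp Require Import all_classical all_reals all_analysis.
From mathcomp Require Import measurable_realfun ring lra.
Import Order.TTheory GRing.Theory Num.Theory.
Local Open Scope ring_scope.

Section H1.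
Context (R : realType).
Local Notation mu := (@lebesgue_measure R).
Local Open Scope ereal_scope.

Lemma int_mono (f g : R -> \bar R) : (forall x, 0 <= f x) -> (forall x, f x <= g x) ->
  \int[mu]_(x in [set: R]) f x <= \int[mu]_(x in [set: R]) g x.
Proof.
move=> f0 fg; have g0 : forall x, 0 <= g x by move=> x; exact: le_trans (f0 x) (fg x).
rewrite (ge0_integralTE mu f0) (ge0_integralTE mu g0).
apply: le_ereal_sup => _ [h /= hf <-]; exists h => //= x; exact: le_trans (hf x) (fg x).
Qed.

Lemma LRn_ge0 n (f : n.-tuple R -> \bar R) : (forall x, 0 <= f x) -> 0 <= lebesgue_integral_Rn f.
Proof.
elim: n f => [|n IH] f f0 /=; first exact: f0.
by apply: integral_ge0 => t _; apply: IH.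
Qed.

Lemma LRn_mono n (f g : n.-tuple R -> \bar R) : (forall x, 0 <= f x) -> (forall x, f x <= g x) ->
  lebesgue_integral_Rn f <= lebesgue_integral_Rn g.
Proof.
elim: n f g => [|n IH] f g f0 fg /=; first exact: fg.
apply: int_mono => t; first by apply: LRn_ge0.
by apply: IH.
Qed.

Lemma LRn_sumprod n K (c : 'I_K -> R) (h : 'I_K -> nat -> R -> R) :
  (forall j, (0 <= c j)%R) -> (forall j i t, (0 <= h j i t)%R) ->
  (forall j i, measurable_fun [set: R] (h j i)) ->
  (forall j i, \int[mu]_(t in [set: R]) (h j i t)%:E = 1) ->
  lebesgue_integral_Rn (fun x : n.-tuple R =>
     (\sum_(j < K) c j * \prod_(i < n) h j i (tnth x i))%R%:E) = (\sum_(j < K) c j)%R%:E.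
Proof.
elim: n c h => [|n IH] c h c0 h0 hm hi /=.
  by congr EFin; apply: eq_bigr => j _; rewrite big_ord0 mulr1.
have E : forall t, lebesgue_integral_Rn (fun u : n.-tuple R =>
     (\sum_(j < K) c j * \prod_(i < n.+1) h j i (tnth [tuple of t :: u] i))%R%:E)
   = (\sum_(j < K) (c j * h j 0 t))%R%:E.
  move=> t; rewrite -(IH (fun j => c j * h j 0%N t)%R (fun j i => h j i.+1)) //; last first.
    by move=> j; rewrite mulr_ge0.
  congr lebesgue_integral_Rn; apply: funext => u; congr EFin; apply: eq_bigr => j _.
  rewrite big_ord_recl mulrA; congr (_ * _)%R.
  by apply: eq_bigr => i _; rewrite tnthS.
under eq_integral => t _ do rewrite E.
have SE : forall t, (\sum_(j < K) c j * h j 0%N t)%R%:E = \sum_(j < K) (c j * h j 0%N t)%:E.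
  by move=> t; rewrite sumEFin.
under eq_integral do rewrite SE.
rewrite ge0_integral_sum; last 3 first.
- done.
- move=> j; apply: measurableT_comp => //; apply: measurable_funM => //; exact: hm.
- by move=> j t _; rewrite lee_fin mulr_ge0.
rewrite (_ : (\sum_(j < K) c j)%R%:E = \sum_(j < K) (c j)%:E); last by rewrite sumEFin.
apply: eq_bigr => j _.
under eq_integral do rewrite EFinM.
rewrite ge0_integralZl_EFin //; first by rewrite hi mule1.
- by move=> t _; rewrite lee_fin.
- by apply: measurableT_comp => //; exact: hm.
Qed.
End H1.

Section H2.
Context (R : realType).
Lemma alg (w t S Q e f : R) : t != 0 -> S != 0 -> Q != 0 ->
  w * t * e * ((t * S * Q)^-1 * f) = w / (S * Q) * (e * f).
Proof. move=> t0 S0 Q0; by field; rewrite Q0 S0 t0. Qed.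

Lemma core (n : nat) (w s eps : R) (x m : n.-tuple R) :
 (0 < n)%N -> 0 < s -> 0 < w ->
 w / (s ^+ n * powR (2 * pi) (n%:R / 2)) * expR (- sqdist x m / (2 * s ^+ 2)) < eps ->
 eps <= (powR w (1 / n%:R) / (Num.sqrt (2 * pi) * s * expR 16)) ^+ n ->
 w / (s ^+ n * powR (2 * pi) (n%:R / 2)) * expR (- sqdist x m / (2 * s ^+ 2)) <=
 w * 2 ^+ n * expR (- 12 * n%:R) * \prod_(i < n) normal_pdf (nth 0 m i) (2 * s) (tnth x i).
Proof.
move=> n0 s0 w0 Ht He.
set q := Num.sqrt (2 * @pi R).
have q0 : 0 < q by rewrite sqrtr_gt0 mulr_gt0 ?pi_gt0.
have Pn : powR (2 * pi) (n%:R / 2) = q ^+ n.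
  rewrite /q -powR12_sqrt ?mulr_ge0 ?pi_ge0 // -powR_mulrn ?powR_ge0 //.
  transitivity (powR (2 * @pi R) (2^-1 * n%:R)); first by rewrite [2^-1 * _]mulrC.
  exact: powRrM.
have Ew : powR w (1 / n%:R) ^+ n = w.
  rewrite -powR_mulrn ?powR_ge0 // -powRrM mul1r mulVf ?powRr1 ?ltW //.
  by rewrite pnatr_eq0 -lt0n.
have s2 : 2 * s != 0 by rewrite mulf_neq0 // gt_eqF.
have Pk : normal_peak (2 * s) = (2 * s * q)^-1.
  rewrite /normal_peak; congr (_^-1).
  rewrite -mulrnAr sqrtrM ?sqr_ge0 // sqrtr_sqr ger0_norm ?mulr_ge0 ?ltW // /q.
  by rewrite [2 * pi]mulr_natl.
have Prod : \prod_(i < n) normal_pdf (nth 0 m i) (2 * s) (tnth x i) =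
    (2 * s * q)^-1 ^+ n * expR (- sqdist x m / (8 * s ^+ 2)).
  under eq_bigr do rewrite normal_pdfE //=.
  rewrite big_split /= prodr_const card_ord Pk -expR_sum; congr (_ * expR _).
  rewrite /sqdist /normal_fun -mulr_suml -sumrN; congr (_ / _).
    by apply: eq_bigr => i _; rewrite [tnth m i](tnth_nth 0).
  by rewrite exprMn; ring.
rewrite Prod; rewrite Pn in Ht *; rewrite expr_div_n Ew !exprMn -expRM_natl -/q in He.
set u := sqdist x m in Ht *.
have u0 : 0 <= u by rewrite /u /sqdist sumr_ge0 // => i _; rewrite sqr_ge0.
have sn : s ^+ n != 0 by rewrite expf_neq0 // gt_eqF.
have qn : q ^+ n != 0 by rewrite expf_neq0 // gt_eqF.
have s2n : s ^+ 2 != 0 by rewrite expf_neq0 // gt_eqF.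
have eN : forall y : R, expR y != 0 by move=> y; rewrite gt_eqF // expR_gt0.
set A := w / (s ^+ n * q ^+ n).
have A0 : 0 < A by rewrite /A divr_gt0 // mulr_gt0 // exprn_gt0.
have HA : A * expR (- u / (2 * s ^+ 2)) < A * expR (- (n%:R * 16)).
  apply: (lt_le_trans Ht); apply: (le_trans He).
  by rewrite expRN /A [q ^+ n * _]mulrC invfM mulrA.
rewrite ltr_pM2l // ltr_expR in HA.
have RR : w * 2 ^+ n * expR (-12 * n%:R) *
  ((2 * s * q)^-1 ^+ n * expR (- u / (8 * s ^+ 2))) =
  A * expR (-12 * n%:R - u / (8 * s ^+ 2)).
  rewrite expRD /A exprVn !exprMn -mulNr; apply: alg => //.
rewrite RR ler_pM2l // ler_expR.
have E1 : - u / (2 * s ^+ 2) = - (u / s ^+ 2) / 2 by field; rewrite ?s2n ?gt_eqF.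
have E2 : u / (8 * s ^+ 2) = (u / s ^+ 2) / 8 by field; rewrite ?s2n ?gt_eqF.
rewrite E1 E2; rewrite E1 in HA.
have nn : 0 <= n%:R :> R by [].
set v := u / s ^+ 2 in HA *.
lra.
Qed.
End H2.

Theorem lemma7 (R : realType) (d k : nat) (w : 'I_k -> R)
    (mu : 'I_k -> d.-tuple R) (sigma eps : R) :
  0 < sigma ->
  (forall j, 0 < w j) ->
  \sum_(j < k) w j = 1 ->
  0 < eps ->
  (forall j, eps <= (powR (w j) (1 / d%:R)
                      / (Num.sqrt (2 * pi) * sigma * expR 16)) ^+ d) ->
  (forall j l, j != l -> forall i,
     euclid_dist (mu j) (mu l) >
       2 * sigma * Num.sqrt (2 * d%:R * ln (1 / (sigma * Num.sqrt (2 * pi)))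
                             + 2 * ln (1 / eps) - 2 * ln (1 / w i))) ->
  (lebesgue_integral_Rn
     (fun x : d.-tuple R =>
        (if gmix_density w mu sigma x < eps then gmix_density w mu sigma x else 0)%:E)
   <= (expR (- 8 * d%:R))%:E)%E.
Proof.
move=> s0 w0 w1 e0 He _.
case: d mu He => [|d] mu He.
  have k0 : (0 < k)%N.
    case: k w w0 w1 {mu He} => // w _; rewrite big_ord0 => /esym/eqP.
    by rewrite oner_eq0.
  have He0 := He (Ordinal k0); rewrite expr0 in He0.
  have Hp : forall x, gmix_density w mu sigma x = 1.
    move=> x; rewrite -{}w1 /gmix_density; apply: eq_bigr => j _.
    by rewrite /sqdist big_ord0 expr0 mul0r powRr0 mulr1 invr1 mulr1 oppr0 mul0r expR0 mulr1.
  by rewrite /= Hp ltNge He0 /= lee_fin expR_ge0.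
pose c := fun j => w j * 2 ^+ d.+1 * expR (- 12 * d.+1%:R).
pose h := fun (j : 'I_k) (i : nat) (t : R) => normal_pdf (nth 0 (mu j) i) (2 * sigma) t.
apply: (le_trans (@LRn_mono R d.+1 _ (fun x : d.+1.-tuple R =>
   (\sum_(j < k) c j * \prod_(i < d.+1) h j i (tnth x i))%R%:E) _ _)).
- move=> x; case: ifP => _; rewrite lee_fin // /gmix_density sumr_ge0 // => j _.
    apply: mulr_ge0; last exact: expR_ge0.
    apply: divr_ge0; first exact: ltW.
    by apply: mulr_ge0; [apply: exprn_ge0; exact: ltW | exact: powR_ge0].
- move=> x; case: ifPn => Hx; rewrite lee_fin; last first.
    by rewrite sumr_ge0 // => j _; rewrite mulr_ge0 ?prodr_ge0 // => [|i _];
      [rewrite /c mulr_ge0 ?expR_ge0 // mulr_ge0 ?exprn_ge0 // ltW|exact: normal_pdf_ge0].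
  rewrite /gmix_density ler_sum // => j _.
  apply: core => //.
  apply: le_lt_trans Hx; rewrite /gmix_density (bigD1 j) //= lerDl sumr_ge0 // => l _.
  apply: mulr_ge0; last exact: expR_ge0.
  apply: divr_ge0; first exact: ltW.
  by apply: mulr_ge0; [apply: exprn_ge0; exact: ltW | exact: powR_ge0].
rewrite LRn_sumprod //.
- rewrite lee_fin /c -mulr_suml -mulr_suml w1 mul1r.
  apply: (@le_trans _ _ (expR (d.+1%:R) * expR (-12 * d.+1%:R))).
    rewrite ler_pM2r ?expR_gt0 // -[X in expR X]mulr1 expRM_natl.
    apply: lerXn2r; rewrite ?inE ?expR_ge0 //.
    - by rewrite nnegrE.
    - by rewrite nnegrE expR_ge0.
    - have := expR_ge1Dx (1 : R); lra.
  rewrite -expRD ler_expR.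
  have : (0 : R) <= d.+1%:R by [].
  lra.
- by move=> j; rewrite /c mulr_ge0 ?expR_ge0 // mulr_ge0 ?exprn_ge0 // ltW.
- by move=> j i t; exact: normal_pdf_ge0.
- by move=> j i; exact: measurable_normal_pdf.
- by move=> j i; exact: integral_normal_pdf.
Qed.
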